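(* If there exists a polyiamond with $n$ tiles and $h$ holes, then $$h\le \frac{3n-2b_{min}(n)-p_{min}(n+h)}{3}.$$
   Context: A polyiamond is a planar shape formed by gluing together finitely many congruent (closed) equilateral triangles (tiles) of the regular triangular lattice along their edges: any two tiles that intersect meet in an entire edge, and the union has connected interior. The number of holes of a polyiamond $A$ is the number of bounded connected components of $\mathbb{R}^2\setminus A$. The perimeter $p(A)$ is the number of lattice edges on the topological boundary of $A$, and $p_{min}(m)$ is the minimum perimeter over all polyiamonds with $m$ tiles. $b(A)$ is the number of lattice edges shared by two tiles of $A$, and $b_{min}(n)$ is the minimum of $b(A)$ over all polyiamonds $A$ with $n$ tiles. *)

(* Defs.v *)
From mathcomp Require Import all_boot all_order all_algebra.
From mathcomp Require Import finmap.

Set Implicit Arguments.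
Unset Strict Implicit.
Unset Printing Implicit Defensive.

Local Open Scope fset_scope.

(* Tiles of the regular triangular lattice.  Use lattice coordinates with
   basis vectors e1 = (1,0), e2 = (1/2, sqrt 3/2).  The tile ((x,y),true)
   is the "up" triangle with vertices (x,y),(x+1,y),(x,y+1); the tile
   ((x,y),false) is the "down" triangle with vertices (x+1,y),(x,y+1),(x+1,y+1).
   Every tile of the lattice is of exactly one of these forms. *)
Definition tile : Type := (int * int * bool)%type.

(* The three tiles sharing an entire edge with a given tile. *)
Definition nbrs (t : tile) : seq tile :=
  let: (x, y, up) := t in
  if up then [:: (x, y, false); (x - 1, y, false); (x, y - 1, false)]%R
  else [:: (x, y, true); (x + 1, y, true); (x, y + 1, true)]%R.

Definition adj (t s : tile) : bool := s \in nbrs t.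

Definition edge_connected (S : {fset tile}) : Prop :=
  forall t s, t \in S -> s \in S ->
    exists p : seq tile, [/\ path adj t p, last t p = s & all (fun u => u \in S) p].

(* A polyiamond: a nonempty finite set of lattice tiles whose union has
   connected interior, i.e. the tiles are edge-connected. *)
Definition polyiamond (A : {fset tile}) : Prop :=
  A != fset0 /\ edge_connected A.

(* A hole of A: a bounded connected component of the plane minus A.  These
   correspond exactly to the finite edge-connected components of the set of
   tiles not in A: a nonempty, edge-connected, finite set of non-A tiles
   that is closed under edge-adjacency within the complement of A. *)
Definition is_hole (A H : {fset tile}) : Prop :=
  [/\ H != fset0,
      forall t, t \in H -> t \notin A,
      edge_connected H &
      forall t s, t \in H -> adj t s -> s \notin A -> s \in H].

Definition has_holes (A : {fset tile}) (h : nat) : Prop :=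
  exists Hs : {fset {fset tile}},
    (forall H, H \in Hs <-> is_hole A H) /\ #|` Hs| = h.

(* perimeter: number of lattice edges on the boundary of A, i.e. edges with
   a tile of A on exactly one side; each is counted once as a pair
   (tile of A, adjacent tile not in A). *)
Definition perimeter (A : {fset tile}) : nat :=
  \sum_(t <- A) count (fun s => s \notin A) (nbrs t).

(* b(A): number of lattice edges shared by two tiles of A; every lattice
   edge borders exactly one up tile, so count from the up tiles. *)
Definition bonds (A : {fset tile}) : nat :=
  \sum_(t <- A | t.2) count (fun s => s \in A) (nbrs t).

Definition is_pmin (m p : nat) : Prop :=
  (exists A, [/\ polyiamond A, #|` A| = m & perimeter A = p]) /\
  (forall A, polyiamond A -> #|` A| = m -> p <= perimeter A).

Definition is_bmin (n b : nat) : Prop :=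
  (exists A, [/\ polyiamond A, #|` A| = n & bonds A = b]) /\
  (forall A, polyiamond A -> #|` A| = n -> b <= bonds A).

(* Main.v *)
Require Import Defs.
From mathcomp Require Import all_boot all_order all_algebra.
From mathcomp Require Import finmap.
From mathcomp Require Import zify.
From Stdlib Require Import Classical ClassicalEpsilon.

Section Helpers.
Set Implicit Arguments.
Unset Strict Implicit.
Local Open Scope fset_scope.
Local Open Scope nat_scope.

Ltac pick3 := rewrite ?inE;
  first [ apply/orP; left; apply/eqP; do 2 f_equal; lia
        | apply/orP; right; apply/orP; left; apply/eqP; do 2 f_equal; lia
        | apply/orP; right; apply/orP; right; apply/eqP; do 2 f_equal; lia ].
Lemma adj_sym t s : adj t s -> adj s t.
Proof.
case: t => [[x y] []]; rewrite /adj /= !inE => /or3P [] /eqP -> /=; pick3.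
Qed.
Lemma memnbrsE t s : (s \in nbrs t) = (t \in nbrs s).
Proof. by apply/idP/idP => /adj_sym. Qed.
Lemma nbrs_irr t : t \notin nbrs t.
Proof. case: t => [[x y] []]; rewrite /= !inE; rewrite ?negb_or; repeat (apply/andP; split);
 apply/eqP => -[]; lia. Qed.
Lemma nbrs_uniq t : uniq (nbrs t).
Proof.
case: t => [[x y] []]; rewrite /= !inE !andbT;
 repeat (apply/andP; split); rewrite ?negb_or; repeat (apply/andP; split);
 try done; apply/eqP => -[]; lia.
Qed.
Lemma size_nbrs t : size (nbrs t) = 3.
Proof. by case: t => [[x y] []]. Qed.

Definition deg (S : {fset tile}) t := count (fun s => s \in S) (nbrs t).
Definition II (S : {fset tile}) := \sum_(t <- S) deg S t.

Lemma count_swap (l s : seq tile) : uniq l -> uniq s ->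
  count (fun x => x \in s) l = count (fun x => x \in l) s.
Proof.
move=> Ul Us; rewrite -!size_filter; apply: perm_size.
apply: uniq_perm; try exact: filter_uniq.
by move=> x; rewrite !mem_filter andbC.
Qed.

Lemma count_sum (T : Type) (a : pred T) (s : seq T) : count a s = \sum_(y <- s) a y.
Proof. by elim: s => [|y s IH]; rewrite ?big_nil ?big_cons //= IH. Qed.

Lemma DC (s1 s2 : seq tile) : uniq s1 -> uniq s2 ->
  \sum_(t <- s1) count (fun x => x \in s2) (nbrs t) =
  \sum_(t <- s2) count (fun x => x \in s1) (nbrs t).
Proof.
move=> U1 U2.
transitivity (\sum_(t <- s1) \sum_(y <- s2) (y \in nbrs t : nat)).
  by apply: eq_bigr => t _; rewrite count_swap ?nbrs_uniq // count_sum.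
rewrite exchange_big /=; apply: eq_bigr => y _.
by rewrite count_swap ?nbrs_uniq // count_sum; apply: eq_bigr => t _; rewrite memnbrsE.
Qed.

Lemma perim_II S : perimeter S + II S = 3 * #|` S|.
Proof.
rewrite /perimeter /II /deg -big_split /=.
rewrite (eq_bigr (fun _ => 3)); last first.
  by move=> t _; rewrite addnC (count_predC (fun s => s \in S)) size_nbrs.
by rewrite big_const_seq count_predT iter_addn_0 mulnC.
Qed.
Lemma deg_union S H t : (forall x, x \in H -> x \notin S) ->
  deg (S `|` H) t = deg S t + deg H t.
Proof.
move=> D; rewrite /deg -count_predUI.
rewrite (@eq_count _ (predI _ _) pred0); last first.
  by move=> x /=; case: (boolP (x \in H)) => [/D /negbTE -> | _]; rewrite ?andbF.
rewrite count_pred0 addn0; apply: eq_count => x /=; by rewrite in_fsetU.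
Qed.

Lemma II_union S H : (forall x, x \in H -> x \notin S) ->
  II (S `|` H) = II S + II H + 2 * \sum_(t <- H) deg S t.
Proof.
move=> D.
have Pm : perm_eq (enum_fset (S `|` H)) (enum_fset S ++ enum_fset H).
  apply: uniq_perm; first exact: fset_uniq.
    rewrite cat_uniq !fset_uniq /= andbT; apply/hasPn => x /D; done.
  by move=> x; rewrite mem_cat -in_fsetU.
rewrite /II (perm_big _ Pm) big_cat /=.
rewrite (eq_bigr (fun t => deg S t + deg H t)); last by move=> t _; rewrite deg_union.
rewrite [X in _ + X = _](eq_bigr (fun t => deg S t + deg H t)); last by move=> t _; rewrite deg_union.
rewrite !big_split /=.
have -> : \sum_(i <- S) deg H i = \sum_(i <- H) deg S i.
  exact: (DC (fset_uniq S) (fset_uniq H)).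
move: (\sum_(i <- S) deg S i) (\sum_(i <- H) deg S i) (\sum_(i <- H) deg H i) => a b c. lia.
Qed.

Lemma II_D1 P t : t \in P -> II P = II (P `\ t) + 2 * deg P t.
Proof.
move=> Ht.
have E : P = (P `\ t) `|` [fset t].
  by apply/fsetP => x; rewrite in_fsetU in_fsetD1 in_fset1; case: (x =P t) => [->|] /=; rewrite ?Ht ?orbF.
have D : forall x, x \in [fset t] -> x \notin P `\ t.
  by move=> x; rewrite in_fset1 in_fsetD1 => /eqP ->; rewrite eqxx.
have dE : deg P t = deg (P `\ t) t.
  rewrite /deg; apply: eq_in_count => x Hx /=; rewrite in_fsetD1.
  by case: (x =P t) => // Ex; move: Hx (nbrs_irr t); rewrite Ex => ->.
rewrite {1}E II_union // big_seq_fset1 -dE.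
have -> : II [fset t] = 0.
  rewrite /II big_seq_fset1 /deg; apply/eqP; rewrite -leqn0 leqNgt -has_count.
  by apply/hasP => -[x Hx]; rewrite in_fset1 => /eqP Ex; move: Hx (nbrs_irr t); rewrite Ex => ->.
by rewrite addn0.
Qed.

Lemma perim_D1 P t : t \in P -> perimeter (P `\ t) + 3 = perimeter P + 2 * deg P t.
Proof.
move=> Ht; have := perim_II P; have := perim_II (P `\ t).
rewrite (II_D1 Ht) (cardfsD1 t P) Ht; lia.
Qed.

Lemma nbrs_side t x : x \in nbrs t -> x.2 = ~~ t.2.
Proof. by case: t => [[a b] []]; rewrite /= !inE => /or3P [] /eqP ->. Qed.

Lemma bondsE S : 2 * bonds S = II S.
Proof.
rewrite /II /bonds [in RHS](bigID (fun t : tile => t.2)) /=.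
suff -> : \sum_(i <- S | ~~ i.2) deg S i = \sum_(t <- S | t.2) count (fun s => s \in S) (nbrs t) by rewrite mul2n -addnn.
have E1 : forall t : tile, ~~ t.2 -> deg S t = count (fun x => x \in [seq u <- enum_fset S | u.2]) (nbrs t).
  move=> t Ht; apply: eq_in_count => x Hx; rewrite mem_filter (nbrs_side Hx).
  by rewrite Ht.
have E2 : forall t : tile, t.2 -> count (fun s => s \in S) (nbrs t) = count (fun x => x \in [seq u <- enum_fset S | ~~ u.2]) (nbrs t).
  move=> t Ht; apply: eq_in_count => x Hx; rewrite mem_filter (nbrs_side Hx).
  by rewrite Ht.
transitivity (\sum_(t <- [seq u <- enum_fset S | ~~ u.2]) count (fun x => x \in [seq u <- enum_fset S | u.2]) (nbrs t)).
  by rewrite big_filter; apply: eq_bigr => t Ht; exact: E1.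
transitivity (\sum_(t <- [seq u <- enum_fset S | u.2]) count (fun x => x \in [seq u <- enum_fset S | ~~ u.2]) (nbrs t)).
  apply: DC; exact: filter_uniq (fset_uniq S).
by rewrite big_filter; apply: eq_bigr => t Ht; symmetry; exact: E2.
Qed.

Lemma perim_hole S H : (forall x, x \in H -> x \notin S) ->
  (forall t s, t \in H -> s \in nbrs t -> (s \in H) || (s \in S)) ->
  perimeter (S `|` H) + perimeter H = perimeter S.
Proof.
move=> D Cl.
have E : \sum_(t <- H) deg S t = perimeter H.
  apply: eq_big_seq => t Ht; rewrite /deg; apply: eq_in_count => x Hx /=.
  have := Cl t x Ht Hx; case: (boolP (x \in H)) => [/D /negbTE -> //| _ /= ->] //.
have := perim_II (S `|` H); have := perim_II S; have := perim_II H.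
rewrite II_union // E.
have -> : #|` S `|` H| = #|` S| + #|` H|.
  rewrite cardfsU; have -> : S `&` H = fset0.
    by apply/fsetP => x; rewrite in_fsetI in_fset0; case: (boolP (x \in H)) => [/D /negbTE ->|]; rewrite ?andbF.
  by rewrite cardfs0 subn0.
move: (II S) (II H) => a b; lia.
Qed.

Inductive reach (S : {fset tile}) (a : tile) : tile -> Prop :=
| reach0 : reach S a a
| reachS b c : reach S a b -> adj b c -> c \in S -> reach S a c.

Definition conn (S : {fset tile}) : Prop :=
  forall t s, t \in S -> s \in S -> reach S t s.

Lemma reach_in S a b : reach S a b -> a \in S -> b \in S.
Proof. by elim => // b' c _ IH _ ->. Qed.

Lemma reach_trans S a b c : reach S a b -> reach S b c -> reach S a c.
Proof. move=> Hab; elim => // b' c' _ IH Hadj Hc; exact: reachS IH Hadj Hc. Qed.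

Lemma reach_sym S a b : a \in S -> reach S a b -> reach S b a.
Proof.
move=> Ha; elim => [|b' c Hb IH Hadj Hc]; first exact: reach0.
apply: reach_trans IH; apply: reachS (reach0 _ _) (adj_sym Hadj) _.
exact: reach_in Hb Ha.
Qed.

Lemma reach_mono S S' a b : {subset S <= S'} -> reach S a b -> reach S' a b.
Proof.
move=> sub; elim => [|b' c _ IH Hadj Hc]; first exact: reach0.
exact: reachS IH Hadj (sub _ Hc).
Qed.

Lemma reach_path S a b : reach S a b ->
  exists p, [/\ path adj a p, last a p = b & all (fun u => u \in S) p].
Proof.
elim => [|b' c _ [p [Hp Hl Ha]] Hadj Hc]; first by exists [::].
exists (rcons p c); rewrite rcons_path last_rcons all_rcons Hp Hl Hadj Hc Ha.
by split.
Qed.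

Lemma path_reach S a p : path adj a p -> all (fun u => u \in S) p ->
  reach S a (last a p).
Proof.
elim/last_ind: p => [|p c IH]; first by move=> _ _; exact: reach0.
rewrite rcons_path all_rcons last_rcons => /andP [Hp Hadj] /andP [Hc Ha].
exact: reachS (IH Hp Ha) Hadj Hc.
Qed.

Lemma connE S : edge_connected S <-> conn S.
Proof.
split => H t s Ht Hs.
  by have [p [Hp <- Ha]] := H t s Ht Hs; exact: path_reach.
by apply: reach_path; apply: H.
Qed.

Definition lexle (f g : tile -> int) (s t : tile) : bool :=
  ((f s < f t)%R || ((f s == f t) && (g s <= g t)%R)).

Lemma lexle_trans f g a b c : lexle f g a b -> lexle f g b c -> lexle f g a c.
Proof. rewrite /lexle; lia. Qed.
Lemma lexle_total f g a b : lexle f g a b || lexle f g b a.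
Proof. rewrite /lexle; lia. Qed.

Lemma lexmax_seq (l : seq tile) f g : l != [::] ->
  exists2 t, t \in l & forall s, s \in l -> lexle f g s t.
Proof.
elim: l => [//|a l IH] _.
case: (altP (l =P [::])) => [-> | /IH [m Hm Hmax]].
  by exists a; rewrite ?inE // => s; rewrite inE => /eqP ->; rewrite /lexle; lia.
case: (boolP (lexle f g m a)) => Hma.
  exists a; first by rewrite inE eqxx.
  move=> s; rewrite inE => /orP [/eqP -> | Hs]; first by rewrite /lexle; lia.
  exact: lexle_trans (Hmax s Hs) Hma.
exists m; first by rewrite inE Hm orbT.
move=> s; rewrite inE => /orP [/eqP -> | Hs]; last exact: Hmax.
by have := lexle_total f g m a; rewrite (negbTE Hma).
Qed.

Lemma lexmax (S : {fset tile}) f g : S != fset0 ->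
  exists2 t, t \in S & forall s, s \in S -> lexle f g s t.
Proof.
move/fset0Pn=> [x Hx]; apply: (@lexmax_seq (enum_fset S)).
have : x \in enum_fset S := Hx.
by case: (enum_fset S).
Qed.

Definition phi (t : tile) : int := (3 * t.1.2 + (if t.2 then 1 else 2))%R.
Definition xc (t : tile) : int := t.1.1.

Lemma geo (P : {fset tile}) : P != fset0 -> (forall x, x \in P -> 2 <= deg P x) ->
  exists t u t' u', [/\ t \in P, u \in P, t' \in P & u' \in P] /\
    [/\ adj t u, adj t' u', deg P t = 2 & deg P u = 2] /\ (deg P t' = 2 /\ deg P u' = 2) /\
    [/\ t != t', t != u', u != t' & u != u'].
Proof.
move=> Pn Hd.
have [[[x y] o] Ht Hmax] := lexmax phi xc Pn.
have [[[x' y'] o'] Hb Hmin] := lexmax (fun t => - phi t)%R xc Pn.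
case: o Ht Hmax => Ht Hmax.
  have N1 : (x, y, false) \notin P by apply/negP => /Hmax Hc; clear -Hc; move: Hc; rewrite /lexle /phi /xc /=; lia.
  have N2 : ((x - 1)%R, y, false) \notin P by apply/negP => /Hmax Hc; clear -Hc; move: Hc; rewrite /lexle /phi /xc /=; lia.
  by move: (Hd _ Ht); rewrite /deg /= (negbTE N1) (negbTE N2); case: (_ \in P).
have N1 : (x, (y + 1)%R, true) \notin P by apply/negP => /Hmax Hc; clear -Hc; move: Hc; rewrite /lexle /phi /xc /=; lia.
have Dt := Hd _ Ht; move: (Dt); rewrite /deg /= (negbTE N1) => Dt'.
have Ha : (x, y, true) \in P by move: Dt'; case: (_ \in P); case: (_ \in P).
have Hu : ((x + 1)%R, y, true) \in P by move: Dt'; case: (_ \in P); case: (_ \in P).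
have N2 : ((x + 1)%R, y, false) \notin P by apply/negP => /Hmax Hc; clear -Hc; move: Hc; rewrite /lexle /phi /xc /=; lia.
have Du := Hd _ Hu; move: (Du); rewrite /deg /= (negbTE N2) => Du'.
have Hw : ((x + 1)%R, (y - 1)%R, false) \in P by move: Du'; case: (_ \in P); case: (_ \in P).
have Ew := Hmin _ Hw; rewrite /lexle /phi /xc /= in Ew.
case: o' Hb Hmin Ew => Hb Hmin Ew; last first.
  have M1 : (x', y', true) \notin P by apply/negP => /Hmin Hc; clear -Hc; move: Hc; rewrite /lexle /phi /xc /=; lia.
  have M2 : ((x' + 1)%R, y', true) \notin P by apply/negP => /Hmin Hc; clear -Hc; move: Hc; rewrite /lexle /phi /xc /=; lia.
  by move: (Hd _ Hb); rewrite /deg /= (negbTE M1) (negbTE M2); case: (_ \in P).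
have M1 : (x', (y' - 1)%R, false) \notin P by apply/negP => /Hmin Hc; clear -Hc; move: Hc; rewrite /lexle /phi /xc /=; lia.
have Db := Hd _ Hb; move: (Db); rewrite /deg /= (negbTE M1) => Db'.
have Hv : (x', y', false) \in P by move: Db'; case: (_ \in P); case: (_ \in P).
have M2 : ((x' + 1)%R, y', true) \notin P by apply/negP => /Hmin Hc; clear -Hc; move: Hc; rewrite /lexle /phi /xc /=; lia.
have Dv := Hd _ Hv; move: (Dv); rewrite /deg /= (negbTE M2) => Dv'.
exists (x, y, false), ((x + 1)%R, y, true), (x', y', true), (x', y', false).
split; first by [].
split; last split; last by clear -Ew; split; apply/negP => /eqP E; inversion E; lia.
split.
- by rewrite /adj /= !inE eqxx orbT.
- by rewrite /adj /= !inE eqxx.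
- apply/eqP; rewrite eqn_leq Dt andbT; rewrite /deg /= (negbTE N1); by case: (_ \in P); case: (_ \in P).
- apply/eqP; rewrite eqn_leq Du andbT; rewrite /deg /= (negbTE N2); by case: (_ \in P); case: (_ \in P).
split.
- apply/eqP; rewrite eqn_leq Db andbT; rewrite /deg /= (negbTE M1); by case: (_ \in P); case: (_ \in P).
- apply/eqP; rewrite eqn_leq Dv andbT; rewrite /deg /= (negbTE M2); by case: (_ \in P); case: (_ \in P).
Qed.

Lemma deg_pos S a y : y \in nbrs a -> y \in S -> 1 <= deg S a.
Proof. by move=> Hy HS; rewrite /deg -has_count; apply/hasP; exists y. Qed.

Lemma reach_nbr S a b : reach S b a -> b \in S -> a != b ->
  exists2 y, y \in nbrs a & y \in S.
Proof.
case=> [|y c Hr Hadj Hc] Hb; first by rewrite eqxx.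
move=> _; exists y; first by rewrite memnbrsE.
exact: reach_in Hr Hb.
Qed.

Lemma deg2 S a y1 y2 : y1 \in nbrs a -> y2 \in nbrs a -> y1 \in S -> y2 \in S ->
  y1 != y2 -> 2 <= deg S a.
Proof.
move=> H1 H2 S1 S2 N.
have : count (predU (pred1 y1) (pred1 y2)) (nbrs a) <= deg S a.
  by apply: sub_count => x /= /orP [] /eqP ->.
apply: leq_trans.
have E := count_predUI (pred1 y1) (pred1 y2) (nbrs a).
rewrite (@eq_count _ (predI _ _) pred0) in E; last first.
  by move=> x /=; apply/negP => /andP [/eqP -> /eqP E]; rewrite E eqxx in N.
move: E; rewrite count_pred0 !count_uniq_mem ?nbrs_uniq // H1 H2 addn0 => ->.
done.
Qed.

Lemma deg1_uniq S a c c' : deg S a = 1 -> c \in nbrs a -> c \in S ->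
  c' \in nbrs a -> c' \in S -> c' = c.
Proof.
move=> D Hc Sc Hc' Sc'; apply/eqP; apply/negP => /negP N.
by have := deg2 Hc' Hc Sc' Sc N; rewrite D.
Qed.

Lemma degD1 P t x : t \in P -> deg P x = deg (P `\ t) x + (t \in nbrs x).
Proof.
move=> Ht; rewrite /deg -(count_uniq_mem t (nbrs_uniq x)).
have E := count_predUI (fun y => y \in P `\ t) (pred1 t) (nbrs x).
have Z : count (predI (fun y => y \in P `\ t) (pred1 t)) (nbrs x) = 0.
  apply/eqP; rewrite -leqn0 leqNgt -has_count; apply/hasP => -[y _ /andP [] /=].
  by rewrite in_fsetD1 => /andP [/negbTE ->].
rewrite Z addn0 in E; rewrite -E; apply: eq_count => y /=; rewrite in_fsetD1.
by case: (boolP (y == t)) => [/eqP ->|] /=; rewrite ?Ht ?orbF.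
Qed.

Lemma deg_notin P x : x \notin P -> deg P x = deg (P `\ x) x.
Proof.
move=> Hx; apply: eq_in_count => y Hy /=; rewrite in_fsetD1.
by case: (y =P x) => // E; move: Hy; rewrite E (negbTE (nbrs_irr x)).
Qed.

Lemma deg_self P x : deg P x = deg (P `\ x) x.
Proof.
apply: eq_in_count => y Hy /=; rewrite in_fsetD1.
by case: (y =P x) => // E; move: Hy; rewrite E (negbTE (nbrs_irr x)).
Qed.

Lemma deg_le_card P x : deg P x <= #|` P `\ x|.
Proof.
rewrite deg_self /deg -size_filter; apply: uniq_leq_size; first exact: filter_uniq (nbrs_uniq x).
by move=> y; rewrite mem_filter => /andP [].
Qed.

Lemma leaf_conn P l : conn P -> l \in P -> deg P l = 1 -> conn (P `\ l).
Proof.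
move=> C Hl D.
have [c Hc Sc] : exists2 c, c \in nbrs l & c \in P.
  by apply/hasP; rewrite has_count; move: D; rewrite /deg => ->.
have cl : c != l by apply/eqP => E; move: Hc (nbrs_irr l); rewrite E => ->.
have cP : c \in P `\ l by rewrite in_fsetD1 cl.
move=> a b; rewrite !in_fsetD1 => /andP [al Ha] /andP [bl Hb].
suff Inv : forall y, reach P a y ->
  (y != l -> reach (P `\ l) a y) /\ (y = l -> reach (P `\ l) a c).
  by case: (Inv b (C a b Ha Hb)) => H _; exact: H.
move=> y; elim => [|y1 y2 R [IH1 IH2] Hadj Hy2].
  by split => [_|E]; [exact: reach0 | rewrite E eqxx in al].
have Hy1 : y1 \in P := reach_in R Ha.
split => [y2l | y2l].
  case: (y1 =P l) => [E | /eqP y1l].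
    rewrite E in Hadj; have := deg1_uniq D Hc Sc Hadj Hy2 => ->.
    exact: IH2 E.
  by apply: reachS (IH1 y1l) Hadj _; rewrite in_fsetD1 y2l.
case: (y1 =P l) => [E | /eqP y1l]; first exact: IH2.
rewrite y2l in Hadj; have Hn : y1 \in nbrs l by rewrite memnbrsE.
have := deg1_uniq D Hc Sc Hn Hy1 => E; rewrite -E; exact: IH1.
Qed.

Definition pb (Q : Prop) : bool := if excluded_middle_informative Q then true else false.
Lemma pbP Q : reflect Q (pb Q).
Proof. by rewrite /pb; case: excluded_middle_informative => h; constructor. Qed.

Lemma not_conn S : ~ conn S -> exists a b, [/\ a \in S, b \in S & ~ reach S a b].
Proof.
move=> nc; apply: NNPP => H; apply: nc => a b Ha Hb.
by apply: NNPP => Hr; apply: H; exists a, b.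
Qed.

Definition good (P : {fset tile}) (r : tile) : Prop :=
 (exists l, [/\ l \in P, l != r & deg P l = 1]) \/
 (exists t u, [/\ t \in P, u \in P, t != r & u != r] /\
              [/\ adj t u, deg P t = 2, deg P u = 2 & conn (P `\ t)]).

Lemma good_cut N P r c :
  (forall P r, #|` P| <= N -> conn P -> 1 < #|` P| -> good P r) ->
  #|` P| <= N.+1 -> conn P -> c \in P -> ~ conn (P `\ c) -> good P r.
Proof.
move=> IH HN Cn Hc NC.
have [s1 [s2 [S1 S2 NR]]] := not_conn NC.
have [s [z [Ss Sz NRsz Hr]]] : exists s z, [/\ s \in P `\ c, z \in P `\ c,
    ~ reach (P `\ c) s z & (r \in P `\ c -> ~ reach (P `\ c) s r)].
  case: (classic (r \in P `\ c /\ reach (P `\ c) s1 r)) => [[Hr R1r]|NH].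
    exists s2, s1; split => //.
      by move=> R; apply: NR; exact: reach_sym S2 R.
    move=> _ R2r; apply: NR; apply: reach_trans R1r _; exact: reach_sym S2 R2r.
  by exists s1, s2; split => // Hr R; apply: NH.
set C := [fset y in P `\ c | pb (reach (P `\ c) s y)].
have inC y : (y \in C) = (y \in P `\ c) && pb (reach (P `\ c) s y) by rewrite !inE.
set P' := c |` C.
have inP' y : (y \in P') = (y == c) || (y \in C) by rewrite in_fset1U.
have Cs : s \in C by rewrite inC Ss; apply/pbP; exact: reach0.
have Cc : c \notin C by rewrite inC in_fsetD1 eqxx.
have CP y : y \in C -> y \in P by rewrite inC in_fsetD1 => /andP [/andP [_ ->]].
have Cnc y : y \in C -> y != c by rewrite inC in_fsetD1 => /andP [/andP [->]].
have CR y : y \in C -> reach (P `\ c) s y by rewrite inC => /andP [_ /pbP].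
have P'P y : y \in P' -> y \in P by rewrite inP' => /orP [/eqP ->|/CP].
have Cz : z \notin P'.
  rewrite inP' inC negb_or; apply/andP; split.
    by move: Sz; rewrite in_fsetD1 => /andP [].
  by rewrite negb_and; apply/orP; right; apply/pbP.
have Cr : r \notin C by apply/negP => Hrc; apply: (Hr _ (CR _ Hrc)); rewrite inC in Hrc; case/andP: Hrc.
have Cl y y' : y \in C -> y' \in nbrs y -> y' \in P -> y' \in P'.
  move=> Hy Hn Hy'; rewrite inP'; case: (boolP (y' == c)) => //= y'c.
  rewrite inC in_fsetD1 y'c Hy' /=; apply/pbP; apply: (reachS (CR _ Hy) Hn).
  by rewrite in_fsetD1 y'c.
have cP' : c \in P' by rewrite inP' eqxx.
have card_lt : #|` P'| < #|` P|.
  have zP : z \in P by move: Sz; rewrite in_fsetD1 => /andP [].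
  rewrite (cardfsD1 z P) zP add1n ltnS; apply: fsubset_leq_card.
  apply/fsubsetP => y Hy; rewrite in_fsetD1 P'P // andbT.
  by apply: contraNneq Cz => <-.
have card2 : 1 < #|` P'|.
  rewrite cardfsU1 Cc add1n ltnS cardfs_gt0; apply/fset0Pn; by exists s.
have reachC y : reach (P `\ c) s y -> reach P' s y.
  elim => [|b d R IHr Hadj Hd]; first exact: reach0.
  apply: (reachS IHr Hadj); rewrite inP' inC Hd /= orbC; apply/orP; left.
  apply/pbP; exact: reachS R Hadj Hd.
have sc : reach P' s c.
  suff Inv : forall y, reach P s y -> reach P' s c \/ (y \in C /\ reach P' s y).
    by case: (Inv c (Cn s c (CP _ Cs) Hc)) => // -[]; rewrite (negbTE Cc).
  move=> y; elim => [|b d R [IH1|[Hb IH2]] Hadj Hd]; [by right; split => //; exact: reach0 | by left |].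
  have := Cl _ _ Hb Hadj Hd; rewrite inP' => /orP [/eqP E|HdC].
    by left; rewrite -E; apply: (reachS IH2 Hadj); rewrite E.
  by right; split => //; apply: (reachS IH2 Hadj); rewrite inP' HdC orbT.
have toc a : a \in P' -> reach P' a c.
  rewrite inP' => /orP [/eqP ->|Ha]; first exact: reach0.
  apply: reach_trans sc; apply: reach_sym; first by rewrite inP' Cs orbT.
  exact: reachC (CR _ Ha).
have CP' : conn P'.
  move=> a b Ha Hb; apply: reach_trans (toc a Ha) _; exact: reach_sym Hb (toc b Hb).
have degE y : y \in C -> deg P y = deg P' y.
  move=> Hy; apply: eq_in_count => y' Hn /=; apply/idP/idP; [exact: Cl Hy Hn | exact: P'P].
have HN' : #|` P'| <= N by rewrite -ltnS; apply: leq_trans card_lt HN.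
have [[l [Hl lc Dl]] | [t [u [[Ht Hu tc uc] [Htu Dt Du Ct]]]]] := IH P' c HN' CP' card2.
  have lC : l \in C by move: Hl; rewrite inP' (negbTE lc).
  left; exists l; split; [exact: CP | | by rewrite degE].
  by apply: contraNneq Cr => <-.
have tC : t \in C by move: Ht; rewrite inP' (negbTE tc).
have uC : u \in C by move: Hu; rewrite inP' (negbTE uc).
right; exists t, u; split; first split.
- exact: CP.
- exact: CP.
- by apply: contraNneq Cr => <-.
- by apply: contraNneq Cr => <-.
split => //; try by rewrite degE.
have cPt : c \in P `\ t by rewrite in_fsetD1 Hc andbT eq_sym.
have toc2 a : a \in P `\ t -> reach (P `\ t) a c.
  move=> Ha; case: (boolP (a \in P')) => HaP'.
    apply: (@reach_mono (P' `\ t)).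
      by move=> y; rewrite !in_fsetD1 => /andP [-> /P'P].
    apply: Ct; rewrite in_fsetD1 ?HaP' ?cP' ?andbT.
      by move: Ha; rewrite in_fsetD1 => /andP [].
    by rewrite eq_sym.
  have aP : a \in P by move: Ha; rewrite in_fsetD1 => /andP [].
  suff Inv : forall y, reach P a y ->
    (y \notin P' -> reach (P `\ t) a y) /\ (y \in P' -> reach (P `\ t) a c).
    by case: (Inv c (Cn a c aP Hc)) => _; apply.
  have tP' : t \in P' by rewrite inP' tC orbT.
  move=> y; elim => [|b d R [IH1 IH2] Hadj Hd].
    by split => [_|]; [exact: reach0 | rewrite (negbTE HaP')].
  have bP : b \in P := reach_in R aP.
  split => HdP'.
    case: (boolP (b \in P')) => HbP'; last first.
      apply: (reachS (IH1 HbP') Hadj); rewrite in_fsetD1 Hd andbT.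
      by apply: contraNneq HdP' => ->.
    have Eb : b = c.
      move: HbP'; rewrite inP' => /orP [/eqP //|HbC].
      by move: HdP'; rewrite (Cl _ _ HbC Hadj Hd).
    apply: (reachS (IH2 HbP') _); first by rewrite -Eb.
    rewrite in_fsetD1 Hd andbT; by apply: contraNneq HdP' => ->.
  case: (boolP (b \in P')) => HbP'; first exact: IH2.
  have Ed : d = c.
    move: HdP'; rewrite inP' => /orP [/eqP //|HdC].
    by move: HbP'; rewrite (Cl _ _ HdC (adj_sym Hadj) bP).
  rewrite -Ed; apply: (reachS (IH1 HbP') Hadj); rewrite Ed //.
move=> a b Ha Hb; apply: reach_trans (toc2 a Ha) _; exact: reach_sym Hb (toc2 b Hb).
Qed.

Lemma pick_in (S : {fset tile}) : 0 < #|` S| -> exists z, z \in S.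
Proof. by rewrite cardfs_gt0 => /fset0Pn. Qed.

Lemma nbr_neq x c : c \in nbrs x -> c != x.
Proof. by move=> Hc; apply/eqP => E; move: Hc (nbrs_irr x); rewrite E => ->. Qed.

Lemma good_nocut P r : conn P -> 1 < #|` P| ->
  (forall c, c \in P -> conn (P `\ c)) -> good P r.
Proof.
move=> Cn H2 NC.
case: (ltnP 2 #|` P|) => H3.
  have D2 x : x \in P -> 2 <= deg P x.
    move=> Hx.
    have [z1 Hz1] : exists z, z \in P `\ x.
      by apply: pick_in; move: H2; rewrite (cardfsD1 x P) Hx; lia.
    move: Hz1; rewrite in_fsetD1 => /andP [z1x Hz1].
    have xz1 : x != z1 by rewrite eq_sym.
    have [c Hc Pc] := reach_nbr (Cn z1 x Hz1 Hx) Hz1 xz1.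
    have cx := nbr_neq Hc.
    have [z Hz] : exists z, z \in P `\ x `\ c.
      apply: pick_in; move: H3; rewrite (cardfsD1 x P) Hx (cardfsD1 c (P `\ x)).
      rewrite in_fsetD1 cx Pc; lia.
    move: Hz; rewrite !in_fsetD1 => /andP [zc /andP [zx Pz]].
    have xPc : x \in P `\ c by rewrite in_fsetD1 eq_sym cx.
    have zPc : z \in P `\ c by rewrite in_fsetD1 zc.
    have xz : x != z by rewrite eq_sym.
    have [y Hy Py] := reach_nbr (NC c Pc z x zPc xPc) zPc xz.
    move: Py; rewrite in_fsetD1 => /andP [yc Py].
    exact: deg2 Hy Hc Py Pc yc.
  have Pn : P != fset0 by rewrite -cardfs_gt0; lia.
  have [t [u [t' [u' [[Ht Hu Ht' Hu'] [[Atu At'u' Dt Du] [[Dt' Du'] [N1 N2 N3 N4]]]]]]]] := geo Pn D2.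
  right.
  case: (boolP ((t != r) && (u != r))) => [/andP [tr ur]|].
    exists t, u; split; first by split.
    by split => //; apply: NC.
  rewrite negb_and !negbK => Hr.
  exists t', u'; split; last by split => //; apply: NC.
  split => //.
    by case/orP: Hr => /eqP <-; rewrite eq_sym.
  by case/orP: Hr => /eqP <-; rewrite eq_sym.
have E2 : #|` P| = 2 by lia.
have [l Hl] : exists l, l \in P `\ r.
  apply: pick_in; move: E2; rewrite (cardfsD1 r P); case: (r \in P); lia.
move: Hl; rewrite in_fsetD1 => /andP [lr Hl].
left; exists l; split => //.
have [z Hz] : exists z, z \in P `\ l.
  by apply: pick_in; move: E2; rewrite (cardfsD1 l P) Hl; lia.
move: Hz; rewrite in_fsetD1 => /andP [zl Hz].
have lz : l != z by rewrite eq_sym.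
have [y Hy Py] := reach_nbr (Cn z l Hz Hl) Hz lz.
apply/eqP; rewrite eqn_leq (deg_pos Hy Py) andbT.
by apply: leq_trans (deg_le_card P l) _; move: E2; rewrite (cardfsD1 l P) Hl; lia.
Qed.

Lemma goodG N P r : #|` P| <= N -> conn P -> 1 < #|` P| -> good P r.
Proof.
elim: N P r => [|N IH] P r HN Cn H2; first by lia.
case: (classic (exists c, c \in P /\ ~ conn (P `\ c))) => [[c [Hc NCc]] | NoCut].
  exact: good_cut IH HN Cn Hc NCc.
apply: good_nocut => // c Hc; apply: NNPP => NCc; apply: NoCut; by exists c.
Qed.

Lemma step P : conn P -> 1 < #|` P| ->
 (exists P', [/\ conn P', #|` P'| = #|` P| - 1 & perimeter P' + 1 = perimeter P]) \/
 (exists P' P'', [/\ conn P', #|` P'| = #|` P| - 1, perimeter P' = perimeter P + 1,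
     conn P'' & #|` P''| = #|` P| - 2] /\ perimeter P'' = perimeter P /\ 2 < #|` P|).
Proof.
move=> Cn H2.
have [[l [Hl _ Dl]] | [t [u [[Ht Hu _ _] [Atu Dt Du Ct]]]]] :=
  @goodG #|` P| P (0, 0, true)%R (leqnn _) Cn H2.
  left; exists (P `\ l); split; first exact: leaf_conn.
    by rewrite (cardfsD1 l P) Hl; lia.
  by have := perim_D1 Hl; rewrite Dl; lia.
right.
have ut : u != t by exact: nbr_neq Atu.
have uP' : u \in P `\ t by rewrite in_fsetD1 ut.
have Du' : deg (P `\ t) u = 1.
  by move: Du; rewrite (degD1 u Ht) -memnbrsE; move: Atu; rewrite /adj => ->; lia.
have H3 : 2 < #|` P|.
  by have := deg_le_card P t; rewrite Dt (cardfsD1 t P) Ht; lia.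
exists (P `\ t), (P `\ t `\ u); split; last split => //.
- split => //.
  + by rewrite (cardfsD1 t P) Ht; lia.
  + by have := perim_D1 Ht; rewrite Dt; lia.
  + exact: leaf_conn.
  + by rewrite (cardfsD1 t P) Ht (cardfsD1 u (P `\ t)) uP'; lia.
- have := perim_D1 Ht; have := perim_D1 uP'; rewrite Dt Du'; lia.
Qed.

Lemma Mlem k P : conn P -> k < #|` P| ->
  exists Q, [/\ conn Q, #|` Q| = #|` P| - k & perimeter Q <= perimeter P + k %% 2].
Proof.
elim: k {-2}k (leqnn k) P => [|K IH] k Hk P Cn HkP.
  have -> : k = 0 by lia.
  by exists P; split => //; lia.
case: k Hk HkP => [|k] Hk HkP.
  by exists P; split => //; lia.
have H2 : 1 < #|` P| by lia.
have [[P' [C' E' p']] | [P' [P'' [[C' E' p' C'' E''] [p'' H3]]]]] := step Cn H2.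
  have Hk' : k <= K by lia.
  have [|Q [CQ EQ pQ]] := IH k Hk' P' C'; first by lia.
  exists Q; split => //; lia.
case: k Hk HkP => [|k] Hk HkP.
  by exists P'; split => //; lia.
have Hk' : k <= K by lia.
have [|Q [CQ EQ pQ]] := IH k Hk' P'' C''; first by lia.
exists Q; split => //; first by lia.
lia.
Qed.

Lemma P3 P : conn P -> 0 < #|` P| -> 3 + (#|` P| - 1) %% 2 <= perimeter P.
Proof.
move: {2}#|` P| (leqnn #|` P|) => N; elim: N P => [|N IH] P HN Cn H1; first by lia.
case: (ltnP 1 #|` P|) => H2.
  have [[P' [C' E' p']] | [P' [P'' [[C' E' p' C'' E''] [p'' H3]]]]] := step Cn H2.
    have h1 : #|` P'| <= N by lia.
    have h2 : 0 < #|` P'| by lia.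
    have := IH P' h1 C' h2; lia.
  have h1 : #|` P''| <= N by lia.
  have h2 : 0 < #|` P''| by lia.
  have := IH P'' h1 C'' h2; lia.
have [t Ht] := pick_in H1.
have := perim_D1 Ht; have := deg_le_card P t.
rewrite (cardfsD1 t P) Ht in H1 H2 *; lia.
Qed.

Lemma card_disj (S H : {fset tile}) : (forall x, x \in H -> x \notin S) ->
  #|` S `|` H| = #|` S| + #|` H|.
Proof.
move=> D; rewrite cardfsU; have -> : S `&` H = fset0.
  by apply/fsetP => x; rewrite in_fsetI in_fset0; case: (boolP (x \in H)) => [/D /negbTE ->|]; rewrite ?andbF.
by rewrite cardfs0 subn0.
Qed.

Lemma hole_sub A H1 H2 x : is_hole A H1 -> is_hole A H2 -> x \in H1 -> x \in H2 ->
  forall y, y \in H1 -> y \in H2.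
Proof.
move=> [_ D1 C1 _] [_ _ _ Cl2] x1 x2 y y1.
have /connE C1' := C1.
elim: (C1' x y x1 y1) => // b d R IH Hadj Hd.
exact: Cl2 IH Hadj (D1 d Hd).
Qed.

Lemma hole_eq A H1 H2 x : is_hole A H1 -> is_hole A H2 -> x \in H1 -> x \in H2 -> H1 = H2.
Proof.
move=> h1 h2 x1 x2; apply/fsetP => y; apply/idP/idP.
  exact: hole_sub h1 h2 x1 x2 y.
exact: hole_sub h2 h1 x2 x1 y.
Qed.

Lemma hole_touch A H : is_hole A H -> exists t s, [/\ t \in H, adj t s & s \in A].
Proof.
move=> [Hn D C Cl].
have [[[x y] o] Ht Hmax] := lexmax phi xc Hn.
case: o Ht Hmax => Ht Hmax.
  have As : adj (x, y, true) (x, y, false) by rewrite /adj /= !inE eqxx.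
  have sH : (x, y, false) \notin H.
    by apply/negP => /Hmax; rewrite /lexle /phi /xc /=; lia.
  exists (x, y, true), (x, y, false); split => //.
  by apply: contraNT sH => /(Cl _ _ Ht As).
have As : adj (x, y, false) (x, (y + 1)%R, true) by rewrite /adj /= !inE eqxx ?orbT.
have sH : (x, (y + 1)%R, true) \notin H.
  by apply/negP => /Hmax; rewrite /lexle /phi /xc /=; lia.
exists (x, y, false), (x, (y + 1)%R, true); split => //.
by apply: contraNT sH => /(Cl _ _ Ht As).
Qed.

Lemma conn_union F H t s : conn F -> conn H -> t \in H -> s \in F -> adj t s ->
  conn (F `|` H).
Proof.
move=> CF CH Ht Hs Ats.
have sF : s \in F `|` H by rewrite in_fsetU Hs.
have subF : {subset F <= F `|` H} by move=> z Hz; rewrite in_fsetU Hz.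
have subH : {subset H <= F `|` H} by move=> z Hz; rewrite in_fsetU Hz orbT.
have tos a : a \in F `|` H -> reach (F `|` H) a s.
  rewrite in_fsetU => /orP [Ha|Ha].
    exact: reach_mono subF (CF a s Ha Hs).
  apply: (reachS (reach_mono subH (CH a t Ha Ht)) Ats); exact: sF.
move=> a b Ha Hb; apply: reach_trans (tos a Ha) _; exact: reach_sym Hb (tos b Hb).
Qed.

Lemma fill A n (L : seq {fset tile}) : conn A -> #|` A| = n -> uniq L ->
  (forall H, H \in L -> is_hole A H) ->
  exists F T, [/\ conn F, #|` F| = n + T, size L <= T, {subset A <= F} &
    (forall x, x \in F -> x \in A \/ exists2 H, H \in L & x \in H)] /\
    perimeter F + 3 * size L + (T - size L) %% 2 <= perimeter A.
Proof.
move=> CA EA; elim: L => [|H L IH] /=.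
  move=> _ _; exists A, 0; split; last by lia.
  split => //; [by rewrite EA addn0 | by move=> x; left].
move=> /andP [HL UL] Hh.
have Hh' : forall H', H' \in L -> is_hole A H' by move=> H' HL'; apply: Hh; rewrite inE HL' orbT.
have [F [T [[CF EF sT AF Fm] pF]]] := IH UL Hh'.
have hH : is_hole A H by apply: Hh; rewrite inE eqxx.
have D : forall x, x \in H -> x \notin F.
  move=> x xH; apply/negP => /Fm [xA|[H' H'L xH']].
    by case: hH => _ D _ _; move: (D x xH); rewrite xA.
  have hH' : is_hole A H' by apply: Hh; rewrite inE H'L orbT.
  by move: HL; rewrite (hole_eq hH hH' xH xH') H'L.
have Cl : forall t s, t \in H -> s \in nbrs t -> (s \in H) || (s \in F).
  move=> t s tH sN; case: (boolP (s \in A)) => sA; first by rewrite AF ?orbT.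
  by case: hH => _ _ _ Cl; rewrite (Cl t s tH sN sA).
have pH := perim_hole D Cl.
have [_ _ /connE CH _] := hH.
have Hn : 0 < #|` H| by case: hH => Hn _ _ _; rewrite cardfs_gt0.
have p3 := P3 CH Hn.
have [t [s [tH Ats sA]]] := hole_touch hH.
exists (F `|` H), (T + #|` H|); split; last first.
  move: pF p3 pH; move: (perimeter F) (perimeter H) (perimeter (F `|` H)) => a b c.
  lia.
split.
- exact: conn_union CF CH tH (AF _ sA) Ats.
- by rewrite card_disj // EF; lia.
- lia.
- by move=> z zA; rewrite in_fsetU AF.
- move=> z; rewrite in_fsetU => /orP [/Fm [zA|[H' H'L zH']]|zH].
  + by left.
  + by right; exists H' => //; rewrite inE H'L orbT.
  + by right; exists H => //; rewrite inE eqxx.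
Qed.

Lemma main_nat (n h bm pm : nat) :
  (exists A : {fset tile}, [/\ polyiamond A, #|` A| = n & has_holes A h]) ->
  is_bmin n bm -> is_pmin (n + h) pm -> h * 3 + 2 * bm + pm <= 3 * n.
Proof.
move=> [A [[An EcA] EA [Hs [HsE HsC]]]] [_ Hbm] [_ Hpm].
have CA : conn A by apply/connE.
have UL := fset_uniq Hs.
have HL : forall H, H \in enum_fset Hs -> is_hole A H by move=> H HH; apply/HsE.
have [F [T [[CF EF sT AF Fm] pF]]] := fill CA EA UL HL.
have sz : size (enum_fset Hs) = h by [].
rewrite sz in sT pF.
have n1 : 0 < n by rewrite -EA cardfs_gt0.
have kF : T - h < #|` F| by rewrite EF; lia.
have [Q [CQ EQ pQ]] := Mlem CF kF.
have EQ' : #|` Q| = n + h by rewrite EQ EF; lia.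
have PQ : polyiamond Q.
  split; last by apply/connE.
  by rewrite -cardfs_gt0 EQ'; lia.
have := Hpm Q PQ EQ'.
have := Hbm A (conj An EcA) EA.
have := bondsE A; have := perim_II A; rewrite EA.
move: (bonds A) (II A) (perimeter A) (perimeter F) (perimeter Q) pF pQ => a b c d e.
lia.
Qed.

End Helpers.

Import Order.TTheory GRing.Theory Num.Theory.

Local Open Scope ring_scope.

Theorem lemma2 (n h : nat) :
  (exists A : {fset tile}, [/\ polyiamond A, #|` A|%fset = n & has_holes A h]) ->
  forall bm pm : nat, is_bmin n bm -> is_pmin (n + h) pm ->
  (h%:R : rat) <= ((3 * n)%:R - (2 * bm)%:R - pm%:R) / 3.
Proof.
move=> HA bm pm Hb Hp.
have key := @main_nat n h bm pm HA Hb Hp.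
rewrite ler_pdivlMr ?ltr0n // lerBrDr lerBrDr.
have -> : (h%:R : rat) * 3 = (h * 3)%N%:R by rewrite natrM.
rewrite -!natrD ler_nat.
lia.
Qed.
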